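(* Let $\mathcal{R}$ be a finite valuation ring of order $q^r$, where $q$ is a power of an odd prime. There is an absolute constant $C>0$ such that for every $\mathcal{A}\subset\mathcal{R}$ with $|\mathcal{A}|\ge 2q^{r-1}$, \[\max\left\{ |\mathcal{A}+\mathcal{A}|,\ |\mathcal{A}^2+\mathcal{A}^2|\right\}\ \ge\ C\min\left\{ q^{\frac{r}{2}}|\mathcal{A}|^{\frac12},\ \frac{|\mathcal{A}|^2}{q^{\frac{2r-1}{2}}}\right\}.\]
   Context: A finite valuation ring is a finite, local, principal commutative ring with identity. Its unique maximal ideal is $(z)$ for a uniformizer $z$; the residue field $\mathcal{R}/(z)$ has $q$ elements; $r$ is the smallest positive integer with $z^r=0$; then $|\mathcal{R}|=q^r$ and $|(z)|=q^{r-1}$. For $\mathcal{A}\subset\mathcal{R}$: $\mathcal{A}+\mathcal{A}=\{a+b: a,b\in\mathcal{A}\}$, $\mathcal{A}^2=\{x^2: x\in\mathcal{A}\}$, and $\mathcal{A}^2+\mathcal{A}^2=\{u+v: u,v\in\mathcal{A}^2\}$. *)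

(* Defs.v *)
From HB Require Import structures.
From mathcomp Require Import all_boot all_order all_algebra.
From mathcomp Require Import Rstruct.
Set Implicit Arguments. Unset Strict Implicit. Unset Printing Implicit Defensive.
Import Order.TTheory GRing.Theory Num.Theory.
Local Open Scope ring_scope.

Notation real := Rdefinitions.R.

Section FVR.
Variable Rg : finComUnitRingType.

Definition is_ideal (I : {set Rg}) : Prop :=
  [/\ 0 \in I,
      (forall x y, x \in I -> y \in I -> x + y \in I) &
      (forall a x, x \in I -> a * x \in I)].

Definition pideal (x : Rg) : {set Rg} := [set a * x | a : Rg].

Definition is_maximal_ideal (M : {set Rg}) : Prop :=
  [/\ is_ideal M, (1 : Rg) \notin M &
      forall J : {set Rg}, is_ideal J -> M \subset J -> J = M \/ (1 : Rg) \in J].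

Definition is_local : Prop :=
  exists M, is_maximal_ideal M /\ forall M', is_maximal_ideal M' -> M' = M.

Definition is_principal_ring : Prop :=
  forall I, is_ideal I -> exists x, I = pideal x.

Definition finite_valuation_ring : Prop := is_local /\ is_principal_ring.

Definition quot_card (I : {set Rg}) : nat :=
  #|[set [set x + y | y in I] | x : Rg]|.

Definition sumset (A : {set Rg}) : {set Rg} := [set a + b | a in A, b in A].
Definition sqset (A : {set Rg}) : {set Rg} := [set x ^+ 2 | x in A].

End FVR.

(* Main.v *)
Require Import Defs.
From HB Require Import structures.
From mathcomp Require Import all_boot all_order all_algebra.
From mathcomp Require Import Rstruct ring lra zify.
Import Order.TTheory GRing.Theory Num.Theory.
Local Open Scope ring_scope.

Lemma card_fibers (T Y : finType) (X : {set T}) (h : T -> Y) k :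
  (forall x0, x0 \in X -> #|[set x in X | h x == h x0]| = k) ->
  #|X| = (#|h @: X| * k)%N.
Proof.
move=> hk; rewrite -sum1_card (partition_big_imset h) /= -sum_nat_const.
apply: eq_bigr => j /imsetP[x0 hx0 ->].
rewrite -(hk x0 hx0) -sum1_card; apply: eq_bigl => i; by rewrite inE.
Qed.

Lemma card_fibers_le (T Y : finType) (X : {set T}) (h : T -> Y) k :
  (forall x0, x0 \in X -> (#|[set x in X | h x == h x0]| <= k)%N) ->
  (#|X| <= #|h @: X| * k)%N.
Proof.
move=> hk; rewrite -sum1_card (partition_big_imset h) /= -sum_nat_const.
apply: leq_sum => j /imsetP[x0 hx0 ->].
apply: leq_trans (hk x0 hx0); rewrite -sum1_card; apply: eq_leq; apply: eq_bigl => i; by rewrite inE.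
Qed.

Section P.
Variables (Rg : finComUnitRingType).
Lemma memP (w x : Rg) : x \in pideal w <-> exists c, x = c * w.
Proof.
split; first by case/imsetP=> c _ ->; exists c.
by case=> c ->; apply/imsetP; exists c.
Qed.
Lemma quot_cardE (M : {set Rg}) : quot_card M = #|[set [set x + y | y in M] | x in [set: Rg]]|.
Proof.
apply: eq_card => C; apply/imsetP/imsetP => -[x _ ->]; by exists x.
Qed.
End P.

Section Q.
Variables (Rg : finComUnitRingType) (w : Rg).
Lemma P0 : 0 \in pideal w.
Proof. by apply/memP; exists 0; rewrite mul0r. Qed.
Lemma PD x y : x \in pideal w -> y \in pideal w -> x + y \in pideal w.
Proof. by move=> /memP[a ->] /memP[b ->]; apply/memP; exists (a + b); rewrite mulrDl. Qed.
Lemma PN x : x \in pideal w -> - x \in pideal w.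
Proof. by move=> /memP[a ->]; apply/memP; exists (- a); rewrite mulNr. Qed.
Lemma PB x y : x \in pideal w -> y \in pideal w -> x - y \in pideal w.
Proof. by move=> hx hy; apply: PD => //; apply: PN. Qed.
End Q.

Section Alg.
Variables (Rg : finComUnitRingType) (z : Rg) (r : nat).
Hypothesis Hmax : is_maximal_ideal (pideal z).
Hypothesis Hr : (0 < r)%N.
Hypothesis Hzr : z ^+ r = 0.
Hypothesis Hzk : forall k, (0 < k < r)%N -> z ^+ k != 0.

Lemma memM x : x \in pideal z <-> exists c, x = c * z.
Proof.
split; first by case/imsetP=> c _ ->; exists c.
by case=> c ->; apply/imsetP; exists c.
Qed.

Lemma M0 : 0 \in pideal z.
Proof. by apply/memM; exists 0; rewrite mul0r. Qed.
Lemma MD x y : x \in pideal z -> y \in pideal z -> x + y \in pideal z.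
Proof. by move=> /memM[a ->] /memM[b ->]; apply/memM; exists (a + b); rewrite mulrDl. Qed.
Lemma MN x : x \in pideal z -> - x \in pideal z.
Proof. by move=> /memM[a ->]; apply/memM; exists (- a); rewrite mulNr. Qed.
Lemma MM a x : x \in pideal z -> a * x \in pideal z.
Proof. by move=> /memM[b ->]; apply/memM; exists (a * b); rewrite mulrA. Qed.
Lemma MB x y : x \in pideal z -> y \in pideal z -> x - y \in pideal z.
Proof. by move=> hx hy; apply: MD => //; apply: MN. Qed.

Lemma M1 : (1 : Rg) \notin pideal z.
Proof. by case: Hmax. Qed.

Lemma unit_notM u : u \is a GRing.unit -> u \notin pideal z.
Proof.
move=> hu; apply/negP => hM; have := MM (u^-1) _ hM; rewrite mulVr //.
by move=> h; move: M1; rewrite h.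
Qed.

Lemma nil_unit m : m \in pideal z -> (1 - m) \is a GRing.unit.
Proof.
move=> /memM[c ->]; apply/unitrPr.
exists (\sum_(i < r) 1 ^+ (r.-1 - i) * (c * z) ^+ i).
by rewrite -subrXX expr1n exprMn Hzr mulr0 subr0.
Qed.

Lemma nonunit_M u : u \isn't a GRing.unit -> u \in pideal z.
Proof.
move=> hu.
pose I := [set x | [exists a, x - a * u \in pideal z]].
have hI : is_ideal I.
  split.
  - by rewrite inE; apply/existsP; exists 0; rewrite mul0r subr0 M0.
  - move=> x y; rewrite !inE => /existsP[a ha] /existsP[b hb].
    apply/existsP; exists (a + b).
    have -> : x + y - (a + b) * u = (x - a * u) + (y - b * u) by ring.
    exact: MD.
  - move=> c x; rewrite !inE => /existsP[a ha]; apply/existsP; exists (c * a).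
    have -> : c * x - c * a * u = c * (x - a * u) by ring.
    exact: MM.
have sub : pideal z \subset I.
  by apply/subsetP=> x hx; rewrite inE; apply/existsP; exists 0; rewrite mul0r subr0.
case: Hmax => _ _ /(_ I hI sub) [eI|].
  have : u \in I by rewrite inE; apply/existsP; exists 1; rewrite mul1r subrr M0.
  by rewrite eI.
rewrite inE => /existsP[a ha].
have := nil_unit _ ha; rewrite opprB addrCA subrr addr0 unitrM => /andP[_ h].
by rewrite h in hu.
Qed.

Lemma unitP u : (u \is a GRing.unit) = (u \notin pideal z).
Proof.
apply/idP/idP; first exact: unit_notM.
by apply: contraR => h; apply: nonunit_M.
Qed.


Lemma decomp a : a = 0 \/ exists j u, u \is a GRing.unit /\ a = u * z ^+ j.
Proof.
have H : forall n b, (n <= r)%N -> z ^+ (r - n) * b = 0 \/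
   exists j u, u \is a GRing.unit /\ z ^+ (r - n) * b = u * z ^+ j.
  elim=> [|n IH] b hn; first by left; rewrite subn0 Hzr mul0r.
  case hb: (b \is a GRing.unit); first by right; exists (r - n.+1)%N, b; rewrite mulrC.
  have /memM [c ->] := nonunit_M _ (negbT hb).
  have -> : z ^+ (r - n.+1) * (c * z) = z ^+ (r - n) * c.
    by rewrite mulrCA -exprSr subnSK // mulrC.
  by apply: IH; apply: ltnW.
by have := H r a (leqnn r); rewrite subnn expr0 mul1r.
Qed.

Lemma annz a : a * z = 0 -> exists c, a = c * z ^+ r.-1.
Proof.
case: (decomp a) => [->|[j [u [hu ->]]]]; first by exists 0; rewrite !mul0r.
move=> h.
have hz : z ^+ j.+1 = 0.
  by apply: (mulrI hu); rewrite mulr0 exprSr mulrA.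
have hn : ~~ (0 < j.+1 < r)%N by apply/negP => /Hzk; rewrite hz eqxx.
have hj : (r.-1 <= j)%N by move: hn; rewrite ltn0Sn /= -leqNgt; case: r Hr.
by exists (u * z ^+ (j - r.-1)); rewrite -mulrA -exprD subnK.
Qed.

Lemma card_chain k : (k < r)%N ->
  #|pideal (z ^+ k)| = (#|pideal (z ^+ k.+1)| * #|pideal (z ^+ r.-1)|)%N.
Proof.
move=> hk.
rewrite (@card_fibers _ _ _ (fun x => x * z) #|pideal (z ^+ r.-1)|).
  congr (_ * _)%N; apply: eq_card => y.
  apply/idP/idP => [/imsetP[x /memP[c ->] ->]|/memP[c ->]].
    by apply/memP; exists c; rewrite exprSr mulrA.
  by apply/imsetP; exists (c * z ^+ k); [apply/memP; exists c | rewrite exprSr mulrA].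
move=> x0 hx0.
have -> : [set x in pideal (z ^+ k) | x * z == x0 * z] = [set x0 + y | y in pideal (z ^+ r.-1)].
  apply/setP => x; rewrite inE; apply/andP/imsetP.
    move=> [hx /eqP he]; exists (x - x0); last by rewrite addrC subrK.
    have : (x - x0) * z = 0 by rewrite mulrBl he subrr.
    by case/annz => c ->; apply/memP; exists c.
  move=> [y /memP[c ->] ->]; split.
    apply: PD => //; apply/memP; exists (c * z ^+ (r.-1 - k)).
    by rewrite -mulrA -exprD subnK //; case: r hk Hr.
  rewrite mulrDl -mulrA -exprSr; case: r hk Hr Hzr => // r' _ _ /= ->.
  by rewrite mulr0 addr0.
by rewrite card_imset //; apply: addrI.
Qed.

Lemma card_pow n : (n <= r)%N ->
  #|pideal (z ^+ (r - n))| = (#|pideal (z ^+ r.-1)| ^ n)%N.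
Proof.
elim: n => [|n IH] hn.
  rewrite subn0 Hzr expn0 -(cards1 (0 : Rg)); apply: eq_card => x.
  rewrite inE; apply/idP/eqP => [/memP[c ->]|->]; first by rewrite mulr0.
  by apply/memP; exists 0; rewrite mulr0.
rewrite expnS mulnC -IH ?(ltnW hn) //.
have h := card_chain (r - n.+1) _.
rewrite h; last by rewrite ltn_subrL; case: r Hr hn.
by rewrite subnSK.
Qed.

Lemma cardT_pideal1 : #|pideal (1 : Rg)| = #|[set: Rg]|.
Proof. apply: eq_card => x; rewrite inE; apply/memP; by exists x; rewrite mulr1. Qed.

Lemma card_quot : #|[set: Rg]| = (quot_card (pideal z) * #|pideal z|)%N.
Proof.
rewrite quot_cardE (@card_fibers _ _ _ (fun x => [set x + y | y in pideal z]) #|pideal z|) //.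
move=> x0 _.
have -> : [set x in [set: Rg] | [set x + y | y in pideal z] == [set x0 + y | y in pideal z]]
   = [set x0 + y | y in pideal z].
  apply/setP => x; rewrite !inE; apply/eqP/imsetP.
    move=> he; have : x \in [set x + y | y in pideal z].
      by apply/imsetP; exists 0; [exact: M0 | rewrite addr0].
    by rewrite he => /imsetP[y hy ->]; exists y.
  move=> [y hy ->]; apply/setP => w; apply/imsetP/imsetP => -[y' hy' ->].
    by exists (y + y'); [exact: MD | rewrite addrA].
  by exists (y' - y); [exact: MB | ring].
by rewrite card_imset //; apply: addrI.
Qed.

Lemma card_struct q : q = quot_card (pideal z) ->
  #|pideal z| = (q ^ r.-1)%N /\ #|[set: Rg]| = (q ^ r)%N.
Proof.
move=> ->.
set Q := #|pideal (z ^+ r.-1)|.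
have hM : #|pideal z| = (Q ^ r.-1)%N.
  by rewrite -card_pow ?leq_pred // -{1}(expr1 z); congr #|pideal (z ^+ _)|; case: r Hr => // r' _ /=; rewrite subSn // subnn.
have hN : #|[set: Rg]| = (Q ^ r)%N.
  by rewrite -cardT_pideal1 -card_pow // subnn expr0.
have hQ : Q = quot_card (pideal z).
  have hpos : (0 < Q ^ r.-1)%N by rewrite -hM; apply/card_gt0P; exists 0; exact: M0.
  have := card_quot; rewrite hN hM.
  move=> h; apply/eqP; rewrite -(eqn_pmul2r hpos) -h -expnS prednK //.
by rewrite -hQ.
Qed.

Lemma two_unit : odd #|[set: Rg]| -> (2 : Rg) \is a GRing.unit.
Proof.
move=> hodd; apply/negPn/negP => h2.
have /memM [c hc] := nonunit_M _ h2.
have h2r : (2:Rg) ^+ r = 0 by rewrite hc exprMn Hzr mulr0.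
have [e [he0 hee]] : exists e : Rg, e != 0 /\ e + e = 0.
  move: h2r; elim: r => [|n IH] h.
    by move: (oner_neq0 Rg); rewrite -h expr0 eqxx.
  case: (eqVneq ((2:Rg)^+n) 0) => [/IH //| hn].
  by exists (2 ^+ n); split => //; rewrite -h exprSr; ring.
move: hodd.
rewrite (@card_fibers _ _ _ (fun x => [set x; x + e]) 2) ?oddM ?andbF //.
move=> x0 _.
have -> : [set x in [set: Rg] | [set x; x + e] == [set x0; x0 + e]] = [set x0; x0 + e].
  apply/setP => x; rewrite !inE; apply/eqP/idP.
    move=> he; have : x \in [set x; x + e] by rewrite !inE eqxx.
    by rewrite he !inE.
  case/orP => /eqP -> //.
  by rewrite -addrA hee addr0 setUC.
rewrite cards2; case: eqP => // h.
by move: he0; rewrite -(addKr x0 e) -h addNr eqxx.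
Qed.

Lemma sq_fiber (h2 : (2:Rg) \is a GRing.unit) (x y : Rg) :
  x \is a GRing.unit -> x ^+ 2 = y ^+ 2 -> y = x \/ y = - x.
Proof.
move=> ux /eqP; rewrite -subr_eq0 subr_sqr => /eqP he.
case ud: (x - y \is a GRing.unit).
  have : x + y = 0 by apply: (mulrI ud); rewrite mulr0.
  by move=> /eqP; rewrite addrC addr_eq0 => /eqP ->; right.
case us: (x + y \is a GRing.unit).
  have : x - y = 0 by apply: (mulIr us); rewrite mul0r.
  by move=> /eqP; rewrite subr_eq0 => /eqP ->; left.
have : (x - y) + (x + y) \in pideal z by apply: MD; apply: nonunit_M; rewrite ?ud ?us.
have -> : (x - y) + (x + y) = 2 * x by ring.
move=> hin; exfalso; move: hin; apply/negP; apply: unit_notM; by rewrite unitrM h2 ux.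
Qed.

Lemma sq_card (h2 : (2:Rg) \is a GRing.unit) (A : {set Rg}) :
  (#|A| <= 2 * #|sqset A| + #|pideal z|)%N.
Proof.
set U := [set x : Rg | x \is a GRing.unit].
rewrite -(cardsID U A).
apply: leq_add.
  rewrite mulnC.
  apply: leq_trans (@card_fibers_le _ _ (A :&: U) (fun x => x ^+ 2) 2 _) _.
    move=> x0; rewrite !inE => /andP[_ ux0].
    apply: leq_trans (_ : #|[set x0; - x0]| <= 2)%N; last by rewrite cards2; case: (_ != _).
    apply: subset_leq_card; apply/subsetP => x; rewrite !inE => /andP[/andP[_ ux] /eqP e].
    by case: (sq_fiber h2 _ _ ux0 (esym e)) => ->; rewrite eqxx ?orbT.
  rewrite leq_mul2r; apply/orP; right; apply: subset_leq_card.
  by apply: imsetS; apply: subsetIl.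
apply: subset_leq_card; apply/subsetP => x; rewrite !inE => /andP[hx _].
exact: nonunit_M.
Qed.
End Alg.


Lemma big_setX_nat (T1 T2 : finType) (S : {set T1}) (T : {set T2}) (F : T1 * T2 -> nat) :
  (\sum_(p in setX S T) F p = \sum_(x in S) \sum_(y in T) F (x, y))%N.
Proof.
rewrite pair_big /=; apply: eq_big => [[x y]|[x y] _] //=; by rewrite !inE.
Qed.

Lemma sum_le1 (T : finType) (A : {pred T}) (P : pred T) :
  (forall i j, P i -> P j -> i = j) -> (\sum_(i in A) (P i : nat) <= 1)%N.
Proof.
move=> hu.
case: (pickP P) => [i0 hi0|hn].
  apply: leq_trans (_ : \sum_(i in A) ((i == i0) : nat) <= 1)%N.
    apply: leq_sum => i _; case hi: (P i) => //; by rewrite (hu _ _ hi hi0) eqxx.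
  rewrite (big_mkcond (fun i => i \in A)) /=.
  rewrite (bigD1 i0) //= big1 => [|i /negbTE ->]; last by case: (_ \in _).
  by rewrite addn0 eqxx; case: (_ \in _).
by rewrite big1 // => i _; rewrite hn.
Qed.

Lemma sum_eq1 {T : finType} (b0 : T) : (\sum_(b : T) ((b == b0) : nat) = 1)%N.
Proof. by rewrite (bigD1 b0) //= eqxx big1 // => b /negbTE ->. Qed.

Section Inc.
Variables (Rg : finComUnitRingType) (M : {set Rg}).
Hypothesis hU : forall x : Rg, (x \is a GRing.unit) = (x \notin M).
Hypothesis h2 : (2 : Rg) \is a GRing.unit.
Variables (S T : {set Rg}).

Definition on (p L : Rg * Rg) : bool := p.2 == (p.1 - L.1) ^+ 2 + L.2.
Definition nL (L : Rg * Rg) : nat := \sum_(p in setX S T) (on p L : nat).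

Lemma nLE L : nL L = #|[set p in setX S T | on p L]|.
Proof.
rewrite -sum1dep_card /nL big_mkcondr /=; apply: eq_bigr => p _; by case: (on p L).
Qed.

Lemma on_count (p : Rg * Rg) : (\sum_(L : Rg * Rg) (on p L : nat))%N = #|Rg|.
Proof.
rewrite -(pair_bigA _ (fun a b => (on p (a, b) : nat))) /= -sum1_card; apply: eq_bigr => a _.
rewrite -(sum_eq1 (p.2 - (p.1 - a) ^+ 2 : Rg)); apply: eq_bigr => b _.
rewrite /on /=; congr nat_of_bool; apply/eqP/eqP => [->|->]; ring.
Qed.

Lemma sum_nL : (\sum_L nL L = #|setX S T| * #|Rg|)%N.
Proof.
rewrite /nL exchange_big /= -sum_nat_const; apply: eq_bigr => p _; exact: on_count.
Qed.


Definition E (p p' : Rg * Rg) (a : Rg) : bool :=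
  p.2 - (p.1 - a) ^+ 2 == p'.2 - (p'.1 - a) ^+ 2.

Lemma codeg p p' : (\sum_(L : Rg * Rg) ((on p L : nat) * (on p' L : nat)) = \sum_(a : Rg) (E p p' a : nat))%N.
Proof.
rewrite -(pair_bigA _ (fun a b => ((on p (a, b) : nat) * (on p' (a, b) : nat))%N)) /=.
apply: eq_bigr => a _.
rewrite (bigD1 (p.2 - (p.1 - a) ^+ 2)) //= big1 => [|b hb].
  rewrite addn0 /on /= /E.
  have -> : (p.2 == (p.1 - a) ^+ 2 + (p.2 - (p.1 - a) ^+ 2)) = true by apply/eqP; ring.
  rewrite mul1n; congr nat_of_bool; apply/eqP/eqP => h; rewrite h; ring.
rewrite /on /=; case: (p.2 =P _) => [he|]; last by rewrite mul0n.
move: hb; rewrite he; have -> : (p.1 - a) ^+ 2 + b - (p.1 - a) ^+ 2 = b by ring.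
by rewrite eqxx.
Qed.

Lemma uniq_alpha p p' a1 a2 : p.1 - p'.1 \notin M -> E p p' a1 -> E p p' a2 -> a1 = a2.
Proof.
rewrite -hU => hu /eqP e1 /eqP e2.
have hu2 : 2 * (p.1 - p'.1) \is a GRing.unit by rewrite unitrM h2 hu.
have : (a1 - a2) * (2 * (p.1 - p'.1)) = 0 * (2 * (p.1 - p'.1)).
  rewrite mul0r.
  have -> : (a1 - a2) * (2 * (p.1 - p'.1)) =
    (p.2 - (p.1 - a1) ^+ 2 - (p'.2 - (p'.1 - a1) ^+ 2)) -
    (p.2 - (p.1 - a2) ^+ 2 - (p'.2 - (p'.1 - a2) ^+ 2)) by ring.
  by rewrite e1 e2 !subrr ?subr0.
by move/(mulIr hu2)/eqP; rewrite subr_eq0 => /eqP.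
Qed.

Lemma uniq_y p (x' y1 y2 a : Rg) : E p (x', y1) a -> E p (x', y2) a -> y1 = y2.
Proof.
move=> /eqP /= e1 /eqP /= e2; move: e2; rewrite e1; exact: (addIr _).
Qed.

Lemma cnt_M (x : Rg) : (#|[set x' in S | (x - x')%R \in M]| <= #|M|)%N.
Proof.
rewrite -(card_imset _ (fun a b (h : x - a = x - b) => oppr_inj (addrI x h))).
apply: subset_leq_card; apply/subsetP => w /imsetP[x' ]; rewrite inE => /andP[_ h] ->.
exact: h.
Qed.

Lemma row_bound p : (\sum_(p' in setX S T) \sum_(a : Rg) (E p p' a : nat) <=
   #|S| * #|T| + #|M| * #|Rg|)%N.
Proof.
rewrite big_setX_nat.
apply: leq_trans (_ : \sum_(x' in S) (#|T| + (((p.1 - x')%R \in M) : nat) * #|Rg|) <= _)%N.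
  apply: leq_sum => x' _.
  case hm: (p.1 - x' \in M).
    rewrite mul1n; apply: leq_trans (leq_addl _ _).
    rewrite exchange_big /= -[X in (_ <= X)%N]sum1_card; apply: leq_sum => a _.
    by apply: sum_le1 => y1 y2; apply: uniq_y.
  rewrite mul0n addn0 -[X in (_ <= X)%N]sum1_card; apply: leq_sum => y' _.
  by apply: sum_le1 => a1 a2; apply: uniq_alpha; rewrite /= hm.
rewrite big_split /= sum_nat_const -big_distrl /= leq_add2l leq_mul2r; apply/orP; right.
have -> : (\sum_(i in S) (((p.1 - i)%R \in M) : nat) = #|[set x' in S | (p.1 - x')%R \in M]|)%N.
  rewrite -sum1dep_card big_mkcondr /=; apply: eq_bigr => i _; by case: (_ \in M).
exact: cnt_M.
Qed.

Lemma sum_nL2 : (\sum_L (nL L) ^ 2 <= #|setX S T| * (#|S| * #|T| + #|M| * #|Rg|))%N.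
Proof.
have -> : (\sum_L (nL L) ^ 2 = \sum_(p in setX S T) \sum_(p' in setX S T) \sum_(a : Rg) (E p p' a : nat))%N.
  under eq_bigr => L _ do rewrite -mulnn /nL big_distrl /=.
  under eq_bigr => L _ do under eq_bigr => p _ do rewrite big_distrr /=.
  rewrite exchange_big /=; apply: eq_bigr => p _.
  rewrite exchange_big /=; apply: eq_bigr => p' _.
  exact: codeg.
rewrite -sum_nat_const; apply: leq_sum => p _; exact: row_bound.
Qed.

Variables (A B : {set Rg}).
Hypothesis hS : forall a c, a \in A -> c \in A -> a + c \in S.
Hypothesis hT : forall b c, b \in B -> c \in A -> b + c ^+ 2 \in T.

Lemma lower : (#|setX A B| * #|A| <= \sum_(L in setX A B) nL L)%N.
Proof.
rewrite -sum_nat_const; apply: leq_sum => L; rewrite inE => /andP[hL1 hL2].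
rewrite nLE.
have hinj : injective (fun c => (L.1 + c, L.2 + c ^+ 2)).
  by move=> c1 c2 [] /addrI.
rewrite -(card_imset _ hinj); apply: subset_leq_card; apply/subsetP => w /imsetP[c hc ->].
rewrite !inE /= hS ?hT //= /on /=; apply/eqP; ring.
Qed.
End Inc.


Lemma le_by_sqr (R : rcfType) (x y : R) : 0 <= x -> 0 <= y -> x ^+ 2 <= y ^+ 2 -> x <= y.
Proof. by move=> hx hy; rewrite ler_sqr // ?nnegrE. Qed.

Lemma final_real (R : rcfType) (a b s t N mu : R) :
  0 < a -> 0 < N -> 0 < mu -> 0 <= s -> 0 <= t -> a <= 4 * b ->
  (s * t < N * a / 2 -> a ^+ 3 * b <= 4 * N * mu * (s * t)) ->
  1 / 4 * Num.min (Num.sqrt N * Num.sqrt a) (a ^+ 2 / Num.sqrt (N * mu)) <= Num.max s t.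
Proof.
move=> ha hN hmu hs ht hab hc.
set m := Num.max s t.
have hsm : s <= m by rewrite le_max lexx.
have htm : t <= m by rewrite le_max lexx orbT.
have hm0 : 0 <= m by apply: le_trans hsm.
have hst : s * t <= m ^+ 2 by rewrite expr2; apply: ler_pM.
case: (ltP (s * t) (N * a / 2)) => hcase.
  have h4 : a ^+ 4 <= 16 * N * mu * m ^+ 2.
    have := hc hcase.
    have h3 : 0 <= a ^+ 3 by rewrite exprn_ge0 // ltW.
    have e4 : a ^+ 4 = a ^+ 3 * a by rewrite exprSr.
    rewrite e4 => h.
    have : a ^+ 3 * a <= a ^+ 3 * (4 * b) by rewrite ler_pM2l ?exprn_gt0.
    have : 4 * N * mu * (s * t) <= 4 * N * mu * m ^+ 2.
      by rewrite ler_pM2l // !mulr_gt0.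
    nra.
  apply: le_trans (_ : 1 / 4 * (a ^+ 2 / Num.sqrt (N * mu)) <= m).
    by rewrite ler_pM2l ?divr_gt0 // ge_min lexx orbT.
  have hw : 0 < Num.sqrt (N * mu) by rewrite sqrtr_gt0 mulr_gt0.
  apply: le_by_sqr => //.
    by rewrite mulr_ge0 ?divr_ge0 ?ltW ?exprn_gt0.
  have -> : (1 / 4 * (a ^+ 2 / Num.sqrt (N * mu))) ^+ 2 = a ^+ 4 / (16 * Num.sqrt (N * mu) ^+ 2).
    by field; rewrite gt_eqF.
  rewrite sqr_sqrtr ?mulr_ge0 ?(ltW hN) ?(ltW hmu) // ler_pdivrMr ?mulr_gt0 //.
  apply: (le_trans h4); rewrite le_eqVlt; apply/orP; left; apply/eqP; ring.
apply: le_trans (_ : 1 / 4 * (Num.sqrt N * Num.sqrt a) <= m).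
  by rewrite ler_pM2l ?divr_gt0 // ge_min lexx.
apply: le_by_sqr => //.
  by rewrite mulr_ge0 ?divr_ge0 ?mulr_ge0 ?sqrtr_ge0.
rewrite !exprMn !sqr_sqrtr ?(ltW hN) ?(ltW ha) //.
have -> : 1 ^+ 2 * 4^-1 ^+ 2 * (N * a) = (N * a) / 16 by field.
have hNa : 0 <= N * a by rewrite mulr_ge0 ?ltW.
lra.
Qed.


Section V.
Variables (R : realFieldType) (I : finType).

Lemma var_ineq (X : {pred I}) (d : I -> R) (lam : R) :
  \sum_(i in X) 2 * lam * d i <= \sum_i d i ^+ 2 + #|X|%:R * lam ^+ 2.
Proof.
apply: le_trans (_ : \sum_(i in X) (d i ^+ 2 + lam ^+ 2) <= _).
  apply: ler_sum => i _; have := sqr_ge0 (d i - lam); nra.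
rewrite big_split /= sumr_const mulr_natl lerD2r.
rewrite [leLHS]big_mkcond /=.
apply: ler_sum => i _; case: (i \in X) => //; exact: sqr_ge0.
Qed.

Lemma expand_sq (n : I -> R) (N c : R) :
  \sum_i (N * n i - c) ^+ 2 =
  N ^+ 2 * \sum_i n i ^+ 2 - 2 * N * c * \sum_i n i + #|I|%:R * c ^+ 2.
Proof.
rewrite (eq_bigr (fun i => N ^+ 2 * n i ^+ 2 + (- (2 * N * c * n i)) + c ^+ 2)); last by move=> i _; ring.
rewrite !big_split /= sumrN sumr_const -!mulr_sumr.
by congr (_ + _); rewrite mulr_natl.
Qed.

Lemma expand_lin (X : {pred I}) (n : I -> R) (N c lam : R) :
  \sum_(i in X) 2 * lam * (N * n i - c) =
  2 * lam * (N * \sum_(i in X) n i - #|X|%:R * c).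
Proof.
rewrite (eq_bigr (fun i => 2 * lam * N * n i + (- (2 * lam * c)))); last by move=> i _; ring.
rewrite big_split /= sumr_const -mulr_sumr -mulr_natr.
ring.
Qed.
End V.

Lemma key_real (R : realFieldType) (I : finType) (X : {pred I}) (n : I -> R) (a b s t N mu : R) :
  0 < N -> 0 <= a -> 0 <= b -> 0 <= s * t -> 0 <= mu ->
  #|X|%:R = a * b -> #|I|%:R = N ^+ 2 ->
  a * b * a <= \sum_(i in X) n i -> \sum_i n i = s * t * N ->
  \sum_i n i ^+ 2 <= s * t * (s * t + mu * N) ->
  s * t < N * a / 2 -> a ^+ 3 * b <= 4 * N * mu * (s * t).
Proof.
move=> hN ha hb hst hmu hX hI F1 F2 F3 hc.
set lam := N * a - s * t.
have hlam : N * a / 2 < lam by rewrite /lam; lra.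
have hNa : 0 <= N * a / 2 by rewrite divr_ge0 ?mulr_ge0 ?ler0n // ltW.
have hlam0 : 0 < lam by lra.
have V := @var_ineq R I X (fun i => N * n i - s * t) lam.
rewrite expand_lin expand_sq F2 hX hI in V.
have hab : 0 <= a * b by rewrite mulr_ge0.
have W : 2 * lam * (a * b * lam) <= 2 * lam * (N * \sum_(i in X) n i - a * b * (s * t)).
  rewrite ler_pM2l ?mulr_gt0 //.
  have : N * (a * b * a) <= N * \sum_(i in X) n i by rewrite ler_pM2l.
  rewrite /lam; lra.
have hQ : N ^+ 2 * \sum_i n i ^+ 2 <= N ^+ 2 * (s * t * (s * t + mu * N)).
  by rewrite ler_pM2l ?exprn_gt0.
have H1 : a * b * lam ^+ 2 <= N ^+ 3 * mu * (s * t).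
  have e1 : 2 * lam * (a * b * lam) = 2 * (a * b * lam ^+ 2) by ring.
  have e2 : N ^+ 2 * (s * t * (s * t + mu * N)) - 2 * N * (s * t) * (s * t * N) + N ^+ 2 * (s * t) ^+ 2
     = N ^+ 3 * mu * (s * t) by ring.
  move: V W hQ; rewrite e1 -e2; lra.
have H2 : a * b * (N * a / 2) ^+ 2 <= a * b * lam ^+ 2.
  by rewrite ler_wpM2l // ler_sqr ?nnegrE ?(ltW hlam) ?(ltW hlam0).
have H3 : N ^+ 2 * (a ^+ 3 * b) <= N ^+ 2 * (4 * N * mu * (s * t)).
  have e4 : N ^+ 2 * (a ^+ 3 * b) = 4 * (a * b * (N * a / 2) ^+ 2) by field.
  have e5 : N ^+ 2 * (4 * N * mu * (s * t)) = 4 * (N ^+ 3 * mu * (s * t)) by ring.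
  rewrite e4 e5; lra.
by move: H3; rewrite ler_pM2l ?exprn_gt0.
Qed.


Theorem theorem1p4 :
  exists C : real, 0 < C /\
  forall (Rg : finComUnitRingType) (z : Rg) (q r : nat),
    finite_valuation_ring Rg ->
    is_maximal_ideal (pideal z) ->
    q = quot_card (pideal z) ->
    (0 < r)%N -> z ^+ r = 0 -> (forall k, (0 < k < r)%N -> z ^+ k != 0) ->
    (exists p k : nat, [/\ prime p, odd p, (0 < k)%N & q = (p ^ k)%N]) ->
    forall A : {set Rg},
      (2 * q ^ r.-1 <= #|A|)%N ->
      Num.max (#|sumset A|%:R : real) (#|sumset (sqset A)|%:R)
        >= C * Num.min (Num.sqrt (q%:R ^+ r) * Num.sqrt #|A|%:R)
                       (#|A|%:R ^+ 2 / Num.sqrt (q%:R ^+ (2 * r - 1)%N)).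
Proof.
exists (1/4); split; first by rewrite divr_gt0.
move=> Rg z q r Hfvr Hmax Hq Hr Hzr Hzk [p [k [pp po kp qe]]] A HA.
have [hmu hN] := card_struct _ _ _ Hmax Hr Hzr Hzk _ Hq.
have hq0 : (0 < q)%N by rewrite qe expn_gt0 prime_gt0.
have hodd : odd #|[set: Rg]| by rewrite hN qe !oddX po !orbT.
have h2 := two_unit _ _ _ Hmax Hzr hodd.
have hU := unitP _ _ _ Hmax Hzr.
set B := sqset A. set S := sumset A. set T := sumset B.
have hS : forall a c, a \in A -> c \in A -> a + c \in S.
  by move=> a c ha hc; rewrite /S /sumset; apply: imset2_f.
have hT : forall b c, b \in B -> c \in A -> b + c ^+ 2 \in T.
  by move=> b c hb hc; rewrite /T /sumset; apply: imset2_f => //; apply: imset_f.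
have L1 := lower _ _ _ _ _ hS hT. rewrite cardsX in L1.
have L2 := sum_nL _ S T. rewrite cardsX in L2.
have L3 := sum_nL2 _ _ hU h2 S T. rewrite cardsX in L3.
have L4 := sq_card _ _ _ Hmax Hzr h2 A.
have hmuA : (2 * #|pideal z| <= #|A|)%N by rewrite hmu.
have hmu0 : (0 < #|pideal z|)%N by rewrite hmu expn_gt0 hq0.
have hN0 : (0 < #|Rg|)%N by rewrite -cardsT hN expn_gt0 hq0.
have eN : (q%:R ^+ r : real) = #|Rg|%:R by rewrite -natrX -hN cardsT.
have eNm : (q%:R ^+ (2 * r - 1) : real) = #|Rg|%:R * #|pideal z|%:R.
  rewrite -natrX -cardsT hN hmu -natrM -expnD; congr (_%:R); congr (q ^ _)%N.
  by case: r Hr {Hzr Hzk hmu hN eN L1 L2 L3 HA hmuA} => // r' _; rewrite /= mul2n doubleS subn1 /= addSn addnn.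
rewrite eN eNm.
apply: (@final_real _ _ (#|B|%:R)).
- by rewrite ltr0n; apply: leq_trans HA; rewrite muln_gt0 expn_gt0 hq0.
- by rewrite ltr0n.
- by rewrite ltr0n.
- exact: ler0n.
- exact: ler0n.
- have : (#|A| <= 4 * #|B|)%N by rewrite /B; lia.
  by rewrite -(ler_nat real) natrM.
move=> hc.
apply: (@key_real _ _ (setX A B) (fun L => (nL _ S T L)%:R)) => //.
all: try by rewrite ltr0n.
all: try exact: ler0n.
- by rewrite -natrM ler0n.
- by rewrite cardsX natrM.
- by rewrite card_prod natrM expr2.
- by rewrite -natr_sum -!natrM ler_nat.
- by rewrite -natr_sum L2 !natrM.
- under eq_bigr do rewrite -natrX.
  by rewrite -natr_sum -!natrM -natrD -!natrM ler_nat.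
Qed.
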